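(* Let $\mathbb{U}$ be a finite-dimensional real vector space, let $T_n=[t_n,t_{n+1}]$ with $\Delta t_n=t_{n+1}-t_n>0$, and let $S\ge 1$. Let $M:\mathbb{U}\times\mathbb{U}\times\mathbb{U}\to\mathbb{R}$ be linear in its second and third arguments, and let $P\ge1$. For $p=1,\dots,P$ let $Q_p:\mathbb{U}\to\mathbb{R}$ be continuously Fréchet-differentiable with derivative $Q_p'(u;v)$ (linear in $v$). Let $\tilde F:\mathbb{U}\times\mathbb{U}^P\times\mathbb{U}\to\mathbb{R}$ be linear in its last argument. Let $\mathcal{I}_n$ be a linear functional on a space of real-valued functions on $T_n$ (containing all integrands below) which is sign-preserving ($\phi\ge0\Rightarrow\mathcal{I}_n[\phi]\ge0$) and satisfies $\mathcal{I}_n[1]=\Delta t_n$. Let $\mathbb{X}_n=\{u\in\mathbb{P}_S(T_n;\mathbb{U}): u(t_n)=u_0\}$ for a given $u_0\in\mathbb{U}$, and $\dot{\mathbb{X}}_n=\mathbb{P}_{S-1}(T_n;\mathbb{U})$. Suppose $(u,(\tilde w_p)_{p=1}^P)\in\mathbb{X}_n\times\dot{\mathbb{X}}_n^P$ satisfies $$\mathcal{I}_n[M(u;\dot u,v)]=\mathcal{I}_n[\tilde F(u,(\tilde w_p);v)]\quad\text{for all } v\in\dot{\mathbb{X}}_n,$$ $$\mathcal{I}_n[M(u;v_p,\tilde w_p)]=\int_{T_n}Q_p'(u;v_p)\,dt\quad\text{for all } v_p\in\dot{\mathbb{X}}_n,\ p=1,\dots,P,$$ where all functions of $t$ are evaluated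 pointwise in time. Fix $q\in\{1,\dots,P\}$. Then: (i) if $\tilde F(a,(b_p);b_q)=0$ for all $a\in\mathbb{U}$, $(b_p)\in\mathbb{U}^P$, then $Q_q(u(t_{n+1}))=Q_q(u(t_n))$; (ii) if $\tilde F(a,(b_p);b_q)\ge0$ for all such arguments, then $Q_q(u(t_{n+1}))\ge Q_q(u(t_n))$; (iii) if $\tilde F(a,(b_p);b_q)\le0$ for all such arguments, then $Q_q(u(t_{n+1}))\le Q_q(u(t_n))$. In all cases $Q_q(u(t_{n+1}))-Q_q(u(t_n))=\mathcal{I}_n[\tilde F(u,(\tilde w_p);\tilde w_q)]$.
   Context: $\mathbb{P}_k(T_n;\mathbb{U})$ denotes polynomials of degree at most $k$ in $t\in T_n$ with coefficients in $\mathbb{U}$; $\dot u$ is the time derivative of $u$, which lies in $\dot{\mathbb{X}}_n$. *)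

(* Defs.v *)
From HB Require Import structures.
From mathcomp Require Import all_boot all_order all_algebra.
From mathcomp Require Import all_classical all_reals all_analysis.
Set Implicit Arguments. Unset Strict Implicit. Unset Printing Implicit Defensive.
Import Order.TTheory GRing.Theory Num.Theory.
Import numFieldNormedType.Exports.
Local Open Scope ring_scope.

(* The finite-dimensional real vector space U is modelled as 'rV[R]_d.
   A U-valued polynomial in t is a row vector of real polynomials
   (component j is the j-th coordinate). *)
Definition upoly (R : realType) (d : nat) := 'rV[{poly R}]_d.

Definition in_Pk (R : realType) (d k : nat) (p : upoly R d) : Prop :=
  forall j : 'I_d, (size (p ord0 j) <= k.+1)%N.

Definition ueval (R : realType) (d : nat) (p : upoly R d) (t : R) : 'rV[R]_d :=
  \row_j (p ord0 j).[t].

Definition uderiv (R : realType) (d : nat) (p : upoly R d) : upoly R d :=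
  \row_j (p ord0 j)^`().

(* Main.v *)
Require Import Defs.
From HB Require Import structures.
From mathcomp Require Import all_boot all_order all_algebra.
From mathcomp Require Import all_classical all_reals all_analysis.
Import Order.TTheory GRing.Theory Num.Theory.
Import numFieldNormedType.Exports.
Local Open Scope classical_set_scope.
Local Open Scope ring_scope.

Section H.
Variables (R : realType) (d : nat).

Lemma size_deriv_le (p : {poly R}) : (size p^`() <= (size p).-1)%N.
Proof.
have [->|p0] := eqVneq p 0; first by rewrite deriv0 size_poly0.
by have := lt_size_deriv p0; case: (size p).
Qed.

Lemma ueval_derivable (u : upoly R d) t : derivable (ueval u) t 1.
Proof.
apply/derivable_mxP => i j.
rewrite /ueval; under eq_fun do rewrite mxE.
exact: derivable_horner.
Qed.

Lemma ueval_derive (u : upoly R d) t : 'D_1 (ueval u) t = ueval (uderiv u) t.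
Proof.
rewrite derive_mx; last exact: ueval_derivable.
apply/matrixP => i j; rewrite !mxE.
have -> : (fun t0 => ueval u t0 i j) = horner (u ord0 j).
  by apply/funext => x; rewrite /ueval mxE.
by rewrite -derive1E -derivE.
Qed.

Lemma ueval_cont (u : upoly R d) : continuous (ueval u).
Proof.
move=> t; apply/differentiable_continuous.
exact/derivable1_diffP/ueval_derivable.
Qed.

Lemma dQ_cont (Q : 'rV[R]_d -> R) (u : upoly R d) :
  (forall v, continuous (fun a => 'd Q a v)) ->
  continuous (fun t => 'd Q (ueval u t) (ueval (uderiv u) t)).
Proof.
move=> cQ.
have E : (fun t => 'd Q (ueval u t) (ueval (uderiv u) t)) =
  (fun t => \sum_(j < d) (((uderiv u) ord0 j).[t] * 'd Q (ueval u t) 'e_j)).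
  apply/funext => t; rewrite {1}(row_sum_delta (ueval (uderiv u) t)).
  by rewrite linear_sum; apply: eq_bigr => j _; rewrite linearZ /ueval mxE.
rewrite E; apply: continuous_big; first exact: add_continuous.
move=> j _.
have h1 : continuous (fun t => ((uderiv u) ord0 j).[t]) by exact: continuous_horner.
have h2 : continuous (fun t => 'd Q (ueval u t) 'e_j).
  move=> t.
  have := @continuous_comp _ _ _ (ueval u) (fun a => 'd Q a 'e_j) t (ueval_cont u t) (cQ 'e_j (ueval u t)).
  exact.
move=> t.
have := @cvgM R R (nbhs t) _ _ _ _ _ (h1 t) (h2 t).
exact.
Qed.
Lemma Q_derive (Q : 'rV[R]_d -> R) (u : upoly R d) t :
  differentiable Q (ueval u t) ->
  derivable (Q \o ueval u) t 1 /\
  'D_1 (Q \o ueval u) t = 'd Q (ueval u t) (ueval (uderiv u) t).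
Proof.
move=> dQ.
have du : differentiable (ueval u) t by exact/derivable1_diffP/ueval_derivable.
have dc : differentiable (Q \o ueval u) t by exact: differentiable_comp.
split; first exact/derivable1_diffP.
have e : 'd (ueval u) t 1 = ueval (uderiv u) t by rewrite -deriveE // ueval_derive.
by rewrite deriveE // diff_comp //= e.
Qed.

Lemma ftc_Q (Q : 'rV[R]_d -> R) (u : upoly R d) t0 t1 : t0 < t1 ->
  (forall a, differentiable Q a) -> (forall v, continuous (fun a => 'd Q a v)) ->
  \int[lebesgue_measure]_(t in `[t0, t1]) 'd Q (ueval u t) (ueval (uderiv u) t)
  = Q (ueval u t1) - Q (ueval u t0).
Proof.
move=> t01 dQ cQ.
rewrite /Rintegral (@continuous_FTC2 _ _ (Q \o ueval u)) //.
- have h := dQ_cont Q u cQ.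
  apply: continuous_subspaceT => x; exact: (h x).
- have cG : continuous (Q \o ueval u).
    move=> t; apply: differentiable_continuous.
    apply/derivable1_diffP; exact: (Q_derive Q u _ (dQ _)).1.
  split.
  + by move=> x _; exact: (Q_derive Q u _ (dQ _)).1.
  + exact: cvg_at_right_filter (cG t0).
  + exact: cvg_at_left_filter (cG t1).
- by move=> x _; rewrite derive1E; exact: (Q_derive Q u _ (dQ _)).2.
Qed.
End H.

Theorem theorem2p1 (R : realType) (d : nat) (t0 t1 : R) (S P : nat)
  (M : 'rV[R]_d -> 'rV[R]_d -> 'rV[R]_d -> R)
  (Q : 'I_P -> 'rV[R]_d -> R)
  (F : 'rV[R]_d -> ('I_P -> 'rV[R]_d) -> 'rV[R]_d -> R)
  (Dom : set (R -> R)) (I : (R -> R) -> R)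
  (u0 : 'rV[R]_d) (u : upoly R d) (w : 'I_P -> upoly R d) (q : 'I_P) :
  t0 < t1 ->
  (1 <= S)%N ->
  (1 <= P)%N ->
  (* M is linear in its second and third arguments *)
  (forall a b c1 c2 (k : R), M a (k *: c1 + c2) b = k * M a c1 b + M a c2 b) ->
  (forall a b c1 c2 (k : R), M a b (k *: c1 + c2) = k * M a b c1 + M a b c2) ->
  (* each Q_p is continuously Frechet differentiable *)
  (forall p a, differentiable (Q p) a) ->
  (forall p v, continuous (fun a => 'd (Q p) a v)) ->
  (* F~ is linear in its last argument *)
  (forall a b c1 c2 (k : R), F a b (k *: c1 + c2) = k * F a b c1 + F a b c2) ->
  (* I_n : a linear, sign-preserving functional on a space Dom of functions
     on T_n, with I_n[1] = t1 - t0 *)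
  Dom (fun _ => 0) ->
  (forall (k : R) f g, Dom f -> Dom g -> Dom (fun t => k * f t + g t)) ->
  (forall (k : R) f g, Dom f -> Dom g ->
     I (fun t => k * f t + g t) = k * I f + I g) ->
  (forall f, Dom f -> (forall t, t0 <= t <= t1 -> 0 <= f t) -> 0 <= I f) ->
  Dom (fun _ => 1) ->
  I (fun _ => 1) = t1 - t0 ->
  (* Dom contains all integrands *)
  (forall v, in_Pk S.-1 v ->
     Dom (fun t => M (ueval u t) (ueval (uderiv u) t) (ueval v t))) ->
  (forall v, in_Pk S.-1 v ->
     Dom (fun t => F (ueval u t) (fun p => ueval (w p) t) (ueval v t))) ->
  (forall p v, in_Pk S.-1 v ->
     Dom (fun t => M (ueval u t) (ueval v t) (ueval (w p) t))) ->
  (* (u, (w_p)) in X_n x Xdot_n^P *)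
  in_Pk S u -> ueval u t0 = u0 ->
  (forall p, in_Pk S.-1 (w p)) ->
  (* the discrete equations *)
  (forall v, in_Pk S.-1 v ->
     I (fun t => M (ueval u t) (ueval (uderiv u) t) (ueval v t)) =
     I (fun t => F (ueval u t) (fun p => ueval (w p) t) (ueval v t))) ->
  (forall p v, in_Pk S.-1 v ->
     I (fun t => M (ueval u t) (ueval v t) (ueval (w p) t)) =
     \int[lebesgue_measure]_(t in `[t0, t1]) 'd (Q p) (ueval u t) (ueval v t)) ->
  [/\ ((forall a b, F a b (b q) = 0) ->
          Q q (ueval u t1) = Q q (ueval u t0)),
      ((forall a b, 0 <= F a b (b q)) ->
          Q q (ueval u t0) <= Q q (ueval u t1)),
      ((forall a b, F a b (b q) <= 0) ->
          Q q (ueval u t1) <= Q q (ueval u t0)) &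
      Q q (ueval u t1) - Q q (ueval u t0) =
        I (fun t => F (ueval u t) (fun p => ueval (w p) t) (ueval (w q) t))].
Proof.
move=> t01 S1 P1 HM2 HM3 dQ cQ HF Dom0 DomL IL Ipos Dom1 I1 DMu DF DMw Hu Hu0 Hw E1 E2.
have Hdu : in_Pk S.-1 (uderiv u).
  move=> j; rewrite /uderiv mxE.
  have h1 := @size_deriv_le R (u ord0 j).
  have h2 := Hu j.
  rewrite prednK //; apply: leq_trans h1 _.
  by move: h2; case: (size _).
set f := fun t => F (ueval u t) (fun p => ueval (w p) t) (ueval (w q) t).
have key : Q q (ueval u t1) - Q q (ueval u t0) = I f.
  rewrite -(@ftc_Q R d (Q q) u _ _ t01 (dQ q) (cQ q)) -(E2 q _ Hdu).
  exact: (E1 (w q) (Hw q)).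
have Df : Dom f := DF (w q) (Hw q).
have I0 : I (fun _ => 0) = 0.
  have := IL 1 _ _ Dom0 Dom0.
  have -> : (fun t : R => 1 * (fun _ => 0 : R) t + (fun _ => 0 : R) t) = (fun _ => 0) by apply/funext => t; rewrite mul1r addr0.
  rewrite mul1r => h; apply: (addrI (I (fun _ => 0))).
  by rewrite addr0 -h.
split.
- move=> H0; apply/eqP; rewrite -subr_eq0 key.
  have -> : f = (fun _ => 0) by apply/funext => t; rewrite /f H0.
  by rewrite I0.
- move=> H0; rewrite -subr_ge0 key; apply: Ipos => // t _; exact: H0.
- move=> H0; rewrite -subr_ge0 -opprB key.
  have := Ipos _ (DomL (-1) _ _ Df Dom0).
  rewrite IL // I0 addr0 mulN1r; apply => t _; rewrite /f mulN1r addr0 oppr_ge0; exact: H0.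
- exact: key.
Qed.
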